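(* Let $\mathcal{A}\in\mathbb{R}^{m\times n\times p}$, $\mathcal{B}\in\mathbb{R}^{m\times l\times p}$, let $T\subset\mathcal{P}([n])$ be a finite collection of column blocks such that $\mathcal{A}_{:\tau:}^*\mathcal{A}_{:\tau:}$ is invertible for every $\tau\in T$, and let $\mathcal{D}(T)$ be a probability distribution on $T$. Let $\mathcal{X}^{(k)}$ be the iterates of the TRBGS method (defined in the context) started from a fixed initial tensor $\mathcal{X}^{(0)}\in\mathbb{R}^{n\times l\times p}$, where the blocks $\tau_1,\tau_2,\dots$ are sampled independently from $\mathcal{D}(T)$. For $\tau\in T$ let $\mathcal{P}_{\mathcal{A}_{:\tau:}}:=\mathcal{A}_{:\tau:}(\mathcal{A}_{:\tau:}^*\mathcal{A}_{:\tau:})^{-1}\mathcal{A}_{:\tau:}^*$, and let $\mathcal{X}^\ddagger$ be a minimizer of $\|\mathcal{A}\mathcal{X}-\mathcal{B}\|_F^2$ over $\mathcal{X}\in\mathbb{R}^{n\times l\times p}$. Set $$\alpha_{\mathcal{A}}=1-\sigma_{\min}\big(\mathbb{E}_{\tau\sim\mathcal{D}(T)}[\mathrm{bcirc}(\mathcal{P}_{\mathcal{A}_{:\tau:}})]\big).$$ Then for every $k\ge 0$, $$\mathbb{E}\big[\|\mathcal{A}\mathcal{X}^{(k)}-\mathcal{A}\mathcal{X}^\ddagger\|_F^2\,\big|\,\mathcal{X}^{(0)}\big]\le \alpha_{\mathcal{A}}^k\,\|\mathcal{A}\mathcal{X}^{(0)}-\mathcal{A}\mathcal{X}^\ddagger\|_F^2.$$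 If, in addition, the system $\mathcal{A}\mathcal{X}=\mathcal{A}\mathcal{X}^\ddagger$ has the unique solution $\mathcal{X}=\mathcal{X}^\ddagger$, then for every $k\ge0$, $$\mathbb{E}\big[\|\mathcal{X}^{(k)}-\mathcal{X}^\ddagger\|_F^2\,\big|\,\mathcal{X}^{(0)}\big]\le \kappa^2(\mathcal{A})\,\alpha_{\mathcal{A}}^k\,\|\mathcal{X}^{(0)}-\mathcal{X}^\ddagger\|_F^2,$$ where $\kappa^2(\mathcal{A}):=\sigma_{\max}^2(\mathrm{bcirc}(\mathcal{A}^\dagger))\,\sigma_{\max}^2(\mathrm{bcirc}(\mathcal{A}))$. The expectations are over the random blocks.
   Context: All tensors are real third-order arrays. For $\mathcal{A}\in\mathbb{R}^{m\times n\times p}$ with frontal slices $\mathcal{A}_1,\dots,\mathcal{A}_p\in\mathbb{R}^{m\times n}$, $\mathrm{bcirc}(\mathcal{A})\in\mathbb{R}^{mp\times np}$ is the block-circulant matrix whose $(i,j)$ block ($i,j\in[p]$) is $\mathcal{A}_{((i-j)\bmod p)+1}$ (so its first block column is $\mathcal{A}_1,\mathcal{A}_2,\dots,\mathcal{A}_p$). For $\mathcal{B}\in\mathbb{R}^{n\times l\times p}$, $\mathrm{unfold}(\mathcal{B})\in\mathbb{R}^{np\times l}$ stacks the frontal slices $\mathcal{B}_1,\dots,\mathcal{B}_p$ vertically, and $\mathrm{fold}$ is its inverse. The t-product is $\mathcal{A}\mathcal{B}=\mathrm{fold}(\mathrm{bcirc}(\mathcal{A})\,\mathrm{unfold}(\mathcal{B}))\in\mathbb{R}^{m\times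 l\times p}$. The transpose $\mathcal{A}^*\in\mathbb{R}^{n\times m\times p}$ is obtained by transposing each frontal slice and reversing the order of the transposed slices $2$ through $p$ (so $\mathrm{bcirc}(\mathcal{A}^* )=\mathrm{bcirc}(\mathcal{A})^\top$). The identity tensor $\mathcal{I}\in\mathbb{R}^{n\times n\times p}$ has first frontal slice $I_n$ and all other slices zero; $\mathcal{C}$ is the inverse of a square tensor $\mathcal{A}$ if $\mathcal{A}\mathcal{C}=\mathcal{C}\mathcal{A}=\mathcal{I}$. The pseudoinverse $\mathcal{A}^\dagger$ is the tensor with $\mathrm{bcirc}(\mathcal{A}^\dagger)=\mathrm{bcirc}(\mathcal{A})^\dagger$ (Moore–Penrose pseudoinverse). $\|\cdot\|_F$ is the Frobenius norm (square root of the sum of squares of all entries). $\sigma_{\min}(\mathbf{M}),\sigma_{\max}(\mathbf{M})$ are the smallest and largest singular values of a matrix $\mathbf{M}$. For $\tau\subset[n]$, $\mathcal{A}_{:\tau:}\in\mathbb{R}^{m\times|\tau|\times p}$ consists of the lateral slices (columns) of $\mathcal{A}$ indexed by $\tau$, and $\mathcal{E}_\tau\in\mathbb{R}^{n\times|\tau|\times p}$ is the tensor whose first frontal slice consists of the columns of $I_n$ indexed by $\tau$ and whose other frontal slices are zero (so $\mathcal{A}\mathcal{E}_\tau=\mathcal{A}_{:\tau:}$). $\mathcal{P}([n])$ is the power set of $[n]=\{1,\dots,n\}$. TRBGS method: given $\mathcal{X}^{(0)}$, for $k=1,2,\dots$ sample $\tau_k$ and set $\mathcal{X}^{(k)}=\mathcal{X}^{(k-1)}-\mathcal{E}_{\tau_k}(\mathcal{A}_{:\tau_k:}^*\mathcal{A}_{:\tau_k:})^{-1}\mathcal{A}_{:\tau_k:}^*(\mathcal{A}\mathcal{X}^{(k-1)}-\mathcal{B})$.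 *)

(* Defs.v *)
From HB Require Import structures.
From mathcomp Require Import all_boot all_order all_algebra.
From mathcomp Require Import boolp classical_sets reals.
Set Implicit Arguments. Unset Strict Implicit. Unset Printing Implicit Defensive.
Import Order.TTheory GRing.Theory Num.Theory.
Local Open Scope ring_scope.

(* Frontal slices are indexed 0..p-1 (slice k+1 of the paper is index k). *)
Definition tensor (R : Type) (m n p : nat) := 'I_p -> 'M[R]_(m, n).

Lemma ord_pos p (i : 'I_p) : (0 < p)%N.
Proof. by apply: leq_ltn_trans (ltn_ord i). Qed.

(* the element (x mod p) of 'I_p (p > 0 is witnessed by i) *)
Definition ord_mod p (x : nat) (i : 'I_p) : 'I_p := Ordinal (ltn_pmod x (ord_pos i)).
Definition ord_sub p (i j : 'I_p) : 'I_p := ord_mod (i + p - j) i.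
Definition ord_neg p (k : 'I_p) : 'I_p := ord_mod (p - k) k.

Section Tensors.
Variable R : realType.

Definition bcirc m n p (A : tensor R m n p) :
  'M[R]_(\sum_(i < p) m, \sum_(j < p) n) :=
  @mxblock R p p (fun _ => m) (fun _ => n) (fun i j => A (ord_sub i j)).

Definition tunfold n l p (B : tensor R n l p) : 'M[R]_(\sum_(i < p) n, l) :=
  @mxcol R p (fun _ => n) l (fun i => B i).

Definition tfold n l p (M : 'M[R]_(\sum_(i < p) n, l)) : tensor R n l p :=
  fun i => @submxcol R p (fun _ => n) l M i.

Definition tprod m n l p (A : tensor R m n p) (B : tensor R n l p) : tensor R m l p :=
  tfold (bcirc A *m tunfold B).

Definition tstar m n p (A : tensor R m n p) : tensor R n m p :=
  fun k => (A (ord_neg k))^T.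

Definition tadd m n p (A B : tensor R m n p) : tensor R m n p := fun k => A k + B k.
Definition tsub m n p (A B : tensor R m n p) : tensor R m n p := fun k => A k - B k.

Definition tid n p : tensor R n n p :=
  fun k => if (k == 0 :> nat) then 1%:M else 0.
Arguments tid n p : clear implicits.

Definition is_tinv n p (A C : tensor R n n p) : Prop :=
  tprod A C = tid n p /\ tprod C A = tid n p.

Definition tinvertible n p (A : tensor R n n p) : Prop := exists C, is_tinv A C.

(* the inverse (chosen classically; meaningful when A is invertible) *)
Definition tinv n p (A : tensor R n n p) : tensor R n n p :=
  match pselect (tinvertible A) with
  | left H => projT1 (cid H)
  | right _ => A
  end.

Definition tfro m n p (A : tensor R m n p) : R :=
  Num.sqrt (\sum_(k < p) \sum_(i < m) \sum_(j < n) (A k i j) ^+ 2).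

(* lateral slices indexed by tau (in increasing order) *)
Definition tcols m n p (A : tensor R m n p) (tau : {set 'I_n}) : tensor R m #|tau| p :=
  fun k => colsub (fun c : 'I_#|tau| => @enum_val _ (mem tau) c) (A k).

Definition tE n p (tau : {set 'I_n}) : tensor R n #|tau| p :=
  fun k => if (k == 0 :> nat) then colsub (fun c : 'I_#|tau| => @enum_val _ (mem tau) c) 1%:M
           else 0.
Arguments tE n p tau : clear implicits.

Definition tproj m n p (A : tensor R m n p) (tau : {set 'I_n}) : tensor R m m p :=
  let At := tcols A tau in tprod At (tprod (tinv (tprod (tstar At) At)) (tstar At)).

Definition trbgs_step m n l p (A : tensor R m n p) (B : tensor R m l p)
  (X : tensor R n l p) (tau : {set 'I_n}) : tensor R n l p :=
  let At := tcols A tau in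
  tsub X (tprod (tE n p tau)
           (tprod (tinv (tprod (tstar At) At))
                  (tprod (tstar At) (tsub (tprod A X) B)))).

Definition trbgs_iter m n l p (A : tensor R m n p) (B : tensor R m l p)
  (X0 : tensor R n l p) (s : seq {set 'I_n}) : tensor R n l p :=
  foldl (trbgs_step A B) X0 s.

Definition iid_expect n (T : {set {set 'I_n}}) (D : {set 'I_n} -> R) (k : nat)
  (f : seq {set 'I_n} -> R) : R :=
  \sum_(t : k.-tuple {set 'I_n} | all (fun tau => tau \in T) t)
     (\prod_(tau <- t) D tau) * f t.

Definition sigma_max a b (M : 'M[R]_(a, b)) : R :=
  Num.sqrt (sup [set lam : R | eigenvalue (M^T *m M) lam]).
Definition sigma_min a b (M : 'M[R]_(a, b)) : R :=
  Num.sqrt (inf [set lam : R | eigenvalue (M^T *m M) lam]).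

Definition is_mp_pinv a b (M : 'M[R]_(a, b)) (X : 'M[R]_(b, a)) : Prop :=
  [/\ M *m X *m M = M, X *m M *m X = X, (M *m X)^T = M *m X & (X *m M)^T = X *m M].

Definition mp_pinv a b (M : 'M[R]_(a, b)) : 'M[R]_(b, a) :=
  match pselect (exists X, is_mp_pinv M X) with
  | left H => projT1 (cid H)
  | right _ => 0
  end.

(* kappa^2(A) = sigma_max^2(bcirc(A^dagger)) sigma_max^2(bcirc(A)),
   where by definition bcirc(A^dagger) = bcirc(A)^dagger *)
Definition kappa2 m n p (A : tensor R m n p) : R :=
  sigma_max (mp_pinv (bcirc A)) ^+ 2 * sigma_max (bcirc A) ^+ 2.

Definition alphaA m n p (A : tensor R m n p) (T : {set {set 'I_n}}) (D : {set 'I_n} -> R) : R :=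
  1 - sigma_min (\sum_(tau in T) D tau *: bcirc (tproj A tau)).

End Tensors.

(* Main.v *)
Require Import Defs.
From HB Require Import structures.
From mathcomp Require Import all_boot all_order all_algebra.
From mathcomp Require Import boolp classical_sets reals.
From mathcomp.algebra_tactics Require Import ring lra.
Set Implicit Arguments. Unset Strict Implicit. Unset Printing Implicit Defensive.
Import Order.TTheory GRing.Theory Num.Theory.
Local Open Scope ring_scope.
Local Open Scope classical_set_scope.

Section Spec.
Variable R : realType.

Definition qf N (M : 'M[R]_N) (v : 'rV[R]_N) : R := (v *m M *m v^T) 0 0.
Definition nrm2 N (v : 'rV[R]_N) : R := (v *m v^T) 0 0.

Lemma nrm2E N (v : 'rV[R]_N) : nrm2 v = \sum_i v 0 i ^+ 2.
Proof. rewrite /nrm2 mxE; apply: eq_bigr => i _; by rewrite mxE expr2. Qed.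

Lemma nrm2_ge0 N v : 0 <= @nrm2 N v.
Proof. rewrite nrm2E; apply: sumr_ge0 => i _; exact: sqr_ge0. Qed.

Lemma nrm2_eq0 N v : @nrm2 N v = 0 -> v = 0.
Proof.
rewrite nrm2E => /eqP; rewrite psumr_eq0 => [/allP H|i _]; last exact: sqr_ge0.
apply/rowP => i; rewrite !mxE; apply/eqP; rewrite -sqrf_eq0.
exact: (H i (mem_index_enum i)).
Qed.

Lemma coord_le N (v : 'rV[R]_N) i : v 0 i ^+ 2 <= nrm2 v.
Proof. rewrite nrm2E (bigD1 i) //= lerDl; apply: sumr_ge0 => j _; exact: sqr_ge0. Qed.

Lemma qfE N (W : 'M[R]_N) v : qf W v = \sum_i \sum_j v 0 i * W i j * v 0 j.
Proof.
rewrite /qf mxE exchange_big; apply: eq_bigr => i _.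
rewrite mxE big_distrl; apply: eq_bigr => j _ /=. by rewrite !mxE.
Qed.

Lemma qf_bound N (W : 'M[R]_N) v :
  `|qf W v| <= (\sum_i \sum_j `|W i j|) * nrm2 v.
Proof.
rewrite qfE big_distrl /=; apply: le_trans (ler_norm_sum _ _ _) _.
apply: ler_sum => i _; rewrite big_distrl /=; apply: le_trans (ler_norm_sum _ _ _) _.
apply: ler_sum => j _.
rewrite !normrM.
have -> : `|v 0 i| * `|W i j| * `|v 0 j| = `|W i j| * (`|v 0 i| * `|v 0 j|) by ring.
apply: ler_wpM2l => //.
have h1 := coord_le v i; have h2 := coord_le v j.
rewrite -(real_normK (num_real (v 0 i))) in h1.
rewrite -(real_normK (num_real (v 0 j))) in h2.
have a0 := normr_ge0 (v 0 i); have b0 := normr_ge0 (v 0 j).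
nra.
Qed.

End Spec.

Section Spec2.
Variable R : realType.

Lemma eD a b (M1 M2 : 'M[R]_(a, b)) i j : (M1 + M2) i j = M1 i j + M2 i j.
Proof. by rewrite mxE. Qed.
Lemma eB a b (M1 M2 : 'M[R]_(a, b)) i j : (M1 - M2) i j = M1 i j - M2 i j.
Proof. by rewrite !mxE. Qed.
Lemma eZ a b (c : R) (M1 : 'M[R]_(a, b)) i j : (c *: M1) i j = c * M1 i j.
Proof. by rewrite mxE. Qed.

Definition bf N (Q : 'M[R]_N) (a b : 'rV[R]_N) : R := (a *m Q *m b^T) 0 0.

Lemma bf_sym N (Q : 'M[R]_N) a b : Q^T = Q -> bf Q a b = bf Q b a.
Proof.
move=> hQ; rewrite /bf -[in LHS](trmxK (a *m Q *m b^T)) [in LHS]mxE.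
by rewrite !trmx_mul trmxK hQ mulmxA.
Qed.

Lemma qf_tr N (M : 'M[R]_N) v : qf M^T v = qf M v.
Proof.
rewrite /qf -[in LHS](trmxK (v *m M^T *m v^T)) [in LHS]mxE.
by rewrite !trmx_mul !trmxK mulmxA.
Qed.

Lemma bf_expand N (Q : 'M[R]_N) a b t : Q^T = Q ->
  qf Q (a + t *: b) = qf Q a + 2 * t * bf Q a b + t ^+ 2 * qf Q b.
Proof.
move=> hQ; have hs := bf_sym a b hQ.
rewrite /qf /bf in hs *.
rewrite linearD /= linearZ /= !mulmxDl !mulmxDr -!scalemxAl -!scalemxAr.
rewrite !eD !eZ hs; ring.
Qed.

Lemma cs_psd N (Q : 'M[R]_N) : Q^T = Q -> (forall v, 0 <= qf Q v) ->
  forall a b, bf Q a b ^+ 2 <= qf Q a * qf Q b.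
Proof.
move=> hQ hpsd a b.
have H t : 0 <= qf Q a + 2 * t * bf Q a b + t ^+ 2 * qf Q b by rewrite -bf_expand.
have x0 := hpsd a; have z0 := hpsd b.
set x := qf Q a in H x0 *; set y := bf Q a b in H *; set z := qf Q b in H z0 *.
have [zz|zpos] := eqVneq z 0.
  have [yz|ynz] := eqVneq y 0; first by rewrite yz zz expr0n /= mulr0.
  have := H (- ((x + 1) / (2 * y))); rewrite zz mulr0 addr0.
  have -> : 2 * - ((x + 1) / (2 * y)) * y = - (x + 1) by field.
  lra.
have zp : 0 < z by rewrite lt_neqAle eq_sym zpos z0.
have := H (- (y / z)).
have hw : z * (y / z) = y by field.
set w := y / z in hw *.
rewrite -hw; nra.
Qed.

Lemma qfB N (M : 'M[R]_N) c v : qf (M - c%:M) v = qf M v - c * nrm2 v.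
Proof.
by rewrite /qf /nrm2 mulmxBr mul_mx_scalar mulmxBl -scalemxAl eB eZ.
Qed.

Lemma eig_of_inf N (M : 'M[R]_N) c : M^T = M ->
  (forall v, c * nrm2 v <= qf M v) ->
  (forall e, 0 < e -> exists v, 0 < nrm2 v /\ qf M v < (c + e) * nrm2 v) ->
  eigenvalue M c.
Proof.
move=> hM hlow hadh.
set Q := M - c%:M.
have QT : Q^T = Q by rewrite /Q linearB /= tr_scalar_mx hM.
have Qpsd v : 0 <= qf Q v by rewrite qfB subr_ge0.
apply: contraT => nE; suff : False by [].
have Qu : Q \in unitmx.
  by rewrite -row_free_unit -kermx_eq0; move: nE; rewrite /eigenvalue /eigenspace negbK.
set W := invmx Q.
pose K : R := \sum_i \sum_j `|W i j|.
have K0 : 0 <= K by apply: sumr_ge0 => i _; apply: sumr_ge0 => j _.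
have key v : nrm2 v ^+ 2 <= qf Q v * (K * nrm2 v).
  have hw : v *m W *m Q = v by rewrite mulmxKV.
  have e1 : nrm2 v = bf Q (v *m W) v by rewrite /bf /nrm2 hw.
  have e2 : qf Q (v *m W) = qf W v.
    by rewrite -(qf_tr W v) /qf hw trmx_mul mulmxA.
  have hcs := cs_psd QT Qpsd (v *m W) v.
  rewrite -e1 e2 in hcs.
  have hb := qf_bound W v; rewrite -/K in hb.
  have := Qpsd v; have := nrm2_ge0 v.
  have hle : qf W v <= K * nrm2 v by apply: le_trans (ler_norm _) hb.
  nra.
have ep : 0 < (K + 1)^-1 by rewrite invr_gt0; lra.
have [v [vp vlt]] := hadh _ ep.
have hQv : qf Q v < (K + 1)^-1 * nrm2 v by rewrite qfB; lra.
have kp : 0 < K + 1 by lra.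
have he := mulVf (lt0r_neq0 kp).
have := key v.
have := Qpsd v.
set e := (K + 1)^-1 in ep hQv he.
rewrite mulrDr mulr1 in he.
have hKn : 0 <= K * nrm2 v by apply: mulr_ge0 => //; exact: nrm2_ge0.
have h1 : qf Q v * (K * nrm2 v) <= e * nrm2 v * (K * nrm2 v).
  by apply: ler_wpM2r => //; apply: ltW.
have h3 : e * nrm2 v * (K * nrm2 v) = (e * K) * nrm2 v ^+ 2 by ring.
have eK : e * K = 1 - e by rewrite -he addrK.
rewrite h3 eK in h1.
have h2 : 0 < e * nrm2 v ^+ 2 by apply: mulr_gt0 => //; apply: exprn_gt0.
move=> _ hk; move: h1 h2 hk; clear; move=> h1 h2 hk; nra.
Qed.

End Spec2.

Section Spec3.
Variable R : realType.

Lemma nrm2_gt0 N (v : 'rV[R]_N) : nrm2 v != 0 -> 0 < nrm2 v.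
Proof. by move=> h; rewrite lt_neqAle eq_sym h nrm2_ge0. Qed.

Lemma qf_tmul a b (M : 'M[R]_(a, b)) u : qf (M^T *m M) u = nrm2 (u *m M^T).
Proof. by rewrite /qf /nrm2 trmx_mul trmxK !mulmxA. Qed.

Lemma qfN N (M : 'M[R]_N) v : qf (- M) v = - qf M v.
Proof. by rewrite /qf mulmxN mulNmx mxE. Qed.

Lemma qf0 N (M : 'M[R]_N) : qf M 0 = 0.
Proof. by rewrite /qf !mul0mx mxE. Qed.

Lemma eig_qf N (M : 'M[R]_N) lam u : u *m M = lam *: u -> qf M u = lam * nrm2 u.
Proof. by move=> h; rewrite /qf h -scalemxAl mxE. Qed.

Lemma sigma_min_bound N (M : 'M[R]_N) : M^T = M -> (forall v, 0 <= qf M v) ->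
  forall v, sigma_min M * nrm2 v <= qf M v.
Proof.
move=> hM hpsd v.
have [nz|vnz] := eqVneq (nrm2 v) 0; first by rewrite nz mulr0.
have vp := nrm2_gt0 vnz.
pose S := [set r : R | exists2 w, 0 < nrm2 w & r = qf M w / nrm2 w]%classic.
have Sne : S !=set0 by exists (qf M v / nrm2 v); exists v.
have Slb0 : lbound S 0 by move=> r [w wp ->]; apply: divr_ge0 => //; exact: ltW.
have Slb : has_lbound S by exists 0.
pose c0 := inf S.
have c0ge : 0 <= c0 := lb_le_inf Sne Slb0.
have hlow w : c0 * nrm2 w <= qf M w.
  have [wz|wnz] := eqVneq (nrm2 w) 0; first by rewrite wz mulr0.
  have wp := nrm2_gt0 wnz.
  rewrite -ler_pdivlMr //; apply: ge_inf => //; by exists w.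
have hadh e : 0 < e -> exists w, 0 < nrm2 w /\ qf M w < (c0 + e) * nrm2 w.
  move=> ep; have [r [w wp ->] hr] := inf_adherent ep (conj Sne Slb).
  by exists w; split => //; rewrite -ltr_pdivrMr.
have eig := eig_of_inf hM hlow hadh.
have eig2 : eigenvalue (M^T *m M) (c0 ^+ 2).
  case/eigenvalueP: eig => w wM wnz; apply/eigenvalueP; exists w => //.
  by rewrite hM mulmxA wM -scalemxAl wM scalerA expr2.
rewrite /sigma_min; set E := [set _ | _].
have Elb : has_lbound E.
  exists 0 => lam; rewrite /E /= => /eigenvalueP [u uM unz].
  have hq := eig_qf uM; rewrite qf_tmul in hq.
  have up : 0 < nrm2 u by apply: nrm2_gt0; apply/eqP => /nrm2_eq0 /eqP; rewrite (negbTE unz).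
  have := nrm2_ge0 (u *m M^T); rewrite hq => h.
  by rewrite -(pmulr_lge0 _ up).
have infle : inf E <= c0 ^+ 2 by apply: ge_inf.
have hs : Num.sqrt (inf E) <= c0.
  by rewrite -(ger0_norm c0ge) -sqrtr_sqr ler_sqrt // sqr_ge0.
apply: le_trans (hlow v); apply: ler_wpM2r => //; exact: nrm2_ge0.
Qed.

Lemma sigma_max_bound a b (M : 'M[R]_(a, b)) (v : 'rV[R]_b) :
  nrm2 (v *m M^T) <= sigma_max M ^+ 2 * nrm2 v.
Proof.
pose Nn := M^T *m M.
have hN : Nn^T = Nn by rewrite /Nn trmx_mul trmxK.
have hq w : qf Nn w = nrm2 (w *m M^T) by rewrite qf_tmul.
have [nz|vnz] := eqVneq (nrm2 v) 0.
  by rewrite nz mulr0 (nrm2_eq0 nz) mul0mx /nrm2 mul0mx mxE.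
have vp := nrm2_gt0 vnz.
pose K : R := \sum_i \sum_j `|Nn i j|.
pose S := [set r : R | exists2 w, 0 < nrm2 w & r = qf Nn w / nrm2 w]%classic.
have Sne : S !=set0 by exists (qf Nn v / nrm2 v); exists v.
have Sub : has_ubound S.
  exists K => r [w wp ->]; rewrite ler_pdivrMr //.
  exact: le_trans (ler_norm _) (qf_bound Nn w).
have Ssup : has_sup S by [].
pose c1 := sup S.
have hup w : qf Nn w <= c1 * nrm2 w.
  have [wz|wnz] := eqVneq (nrm2 w) 0.
    by rewrite wz mulr0 (nrm2_eq0 wz) qf0.
  have wp := nrm2_gt0 wnz.
  rewrite -ler_pdivrMr //; apply: sup_upper_bound => //; by exists w.
have c1ge : 0 <= c1.
  have := hup v; rewrite hq => h.
  rewrite -(pmulr_lge0 _ vp); exact: le_trans (nrm2_ge0 _) h.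
have hlow w : - c1 * nrm2 w <= qf (- Nn) w by rewrite qfN mulNr lerN2.
have hadh e : 0 < e -> exists w, 0 < nrm2 w /\ qf (- Nn) w < (- c1 + e) * nrm2 w.
  move=> ep; have [r [w wp ->] hr] := sup_adherent ep Ssup.
  exists w; split => //; rewrite qfN.
  rewrite ltr_pdivlMr // in hr.
  have -> : (- c1 + e) * nrm2 w = - ((c1 - e) * nrm2 w) by rewrite /c1; ring.
  by rewrite ltrN2.
have hNT : (- Nn)^T = - Nn by rewrite linearN /= hN.
have eig := eig_of_inf hNT hlow hadh.
have eig1 : eigenvalue Nn c1.
  case/eigenvalueP: eig => w wM wnz; apply/eigenvalueP; exists w => //.
  by move: wM; rewrite mulmxN scaleNr => /oppr_inj.
rewrite /sigma_max; set E := [set _ | _].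
have Eub : has_ubound E.
  exists K => lam; rewrite /E /= => /eigenvalueP [u uM unz].
  have hq2 := eig_qf uM.
  have up : 0 < nrm2 u by apply: nrm2_gt0; apply/eqP => /nrm2_eq0 /eqP; rewrite (negbTE unz).
  have hb := le_trans (ler_norm _) (qf_bound Nn u); rewrite hq2 in hb.
  by rewrite -(ler_pM2r up).
have c1le : c1 <= sup E by apply: sup_upper_bound => //; split => //; exists c1.
have E0 : 0 <= sup E by exact: le_trans c1le.
rewrite sqr_sqrtr // -hq; apply: le_trans (hup v) _.
by apply: ler_wpM2r => //; exact: nrm2_ge0.
Qed.

End Spec3.

Section Ord.
Local Open Scope nat_scope.

Lemma ord_sub_spec p (i j : 'I_p) : (ord_sub i j + j) %% p = i.
Proof.
rewrite /= modnDml subnK ?modnDr ?modn_small //.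
exact: leq_trans (ltnW (ltn_ord j)) (leq_addl i p).
Qed.

Lemma ord_sub_uniq p (i j r : 'I_p) : (r + j) %% p = i -> r = ord_sub i j.
Proof.
move=> h; apply: val_inj => /=.
have : (r + j) %% p = (ord_sub i j + j) %% p by rewrite ord_sub_spec.
move/eqP; rewrite eqn_modDr => /eqP.
by rewrite (modn_small (ltn_ord r)) (modn_small (ltn_ord (ord_sub i j))).
Qed.

Lemma ord_subsub p (i j k : 'I_p) :
  ord_sub (ord_sub i j) (ord_sub k j) = ord_sub i k.
Proof.
symmetry; apply: ord_sub_uniq.
set a := ord_sub i k; set b := ord_sub k j; set c := ord_sub i j.
have ha : (a + k) %% p = i := ord_sub_spec i k.
have hb : (b + j) %% p = k := ord_sub_spec k j.
have hc : (c + j) %% p = i := ord_sub_spec i j.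
rewrite -[X in _ = X](modn_small (ltn_ord c)).
apply/eqP; rewrite -(eqn_modDr j) -addnA -modnDmr hb ha hc.
done.
Qed.

Lemma ord_sub_inj p (j : 'I_p) : injective (fun k => ord_sub k j).
Proof.
move=> k k' /= h; apply: val_inj.
by have := ord_sub_spec k j; rewrite h ord_sub_spec.
Qed.

Lemma ord_neg_sub p (i j : 'I_p) : ord_neg (ord_sub i j) = ord_sub j i.
Proof.
set z := ord_mod 0 i.
have hz : ord_neg (ord_sub i j) = ord_sub z (ord_sub i j).
  by apply: val_inj => /=; rewrite mod0n add0n.
rewrite hz; symmetry; apply: ord_sub_uniq.
set a := ord_sub j i; set b := ord_sub i j.
have ha : (a + i) %% p = j := ord_sub_spec j i.
have hb : (b + j) %% p = i := ord_sub_spec i j.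
have -> : nat_of_ord z = 0 by rewrite /= mod0n.
apply/eqP; rewrite -[X in _ == X](mod0n p) -(eqn_modDr j) -addnA -modnDmr hb ha add0n.
by rewrite (modn_small (ltn_ord j)).
Qed.

Lemma ord_sub_eq0 p (i j : 'I_p) : (nat_of_ord (ord_sub i j) == 0%N) = (i == j).
Proof.
apply/eqP/eqP => [h|->].
  apply: val_inj; have := ord_sub_spec i j; rewrite h add0n modn_small //.
by rewrite /= addKn modnn.
Qed.

End Ord.

Section Bcirc.
Variable R : realType.

Lemma unfold_fold n l p (M : 'M[R]_(\sum_(i < p) n, l)) : tunfold (tfold M) = M.
Proof. exact: submxcolK. Qed.

Lemma fold_unfold n l p (X : tensor R n l p) : tfold (tunfold X) = X.
Proof. by apply: functional_extensionality_dep => i; rewrite /tfold /tunfold mxcolK. Qed.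

Lemma unfold_tprod m n l p (U : tensor R m n p) (V : tensor R n l p) :
  tunfold (tprod U V) = bcirc U *m tunfold V.
Proof. exact: unfold_fold. Qed.

Lemma tprod_slice m n l p (U : tensor R m n p) (V : tensor R n l p) r :
  tprod U V r = \sum_j U (ord_sub r j) *m V j.
Proof. by rewrite /tprod /tfold /bcirc /tunfold mul_mxblock_mxrow mxcolK. Qed.

Lemma bcirc_tprod m n l p (U : tensor R m n p) (V : tensor R n l p) :
  bcirc (tprod U V) = bcirc U *m bcirc V.
Proof.
rewrite {2 3}/bcirc mul_mxblock /bcirc; apply: eq_mxblock => i k.
rewrite tprod_slice (reindex_inj (@ord_sub_inj p k)) /=.
by apply: eq_bigr => j _; rewrite ord_subsub.
Qed.

Lemma bcirc_tstar m n p (U : tensor R m n p) : bcirc (tstar U) = (bcirc U)^T.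
Proof.
rewrite /bcirc tr_mxblock; apply: eq_mxblock => i j.
by rewrite /tstar ord_neg_sub.
Qed.

Lemma tunfoldB n l p (X Y : tensor R n l p) : tunfold (tsub X Y) = tunfold X - tunfold Y.
Proof. by rewrite /tunfold /tsub mxcolB. Qed.

Lemma bcirc_tid_mul n p c (M : 'M[R]_(\sum_(i < p) n, c)) : bcirc (@tid R n p) *m M = M.
Proof.
rewrite -(submxcolK M) /bcirc mul_mxblock_mxrow; apply: eq_mxcol => i.
rewrite (bigD1 i) //= big1 ?addr0.
  by rewrite /tid ord_sub_eq0 eqxx mul1mx.
by move=> j ji; rewrite /tid ord_sub_eq0 eq_sym (negbTE ji) mul0mx.
Qed.

Lemma bcirc_tid n p : bcirc (@tid R n p) = 1%:M.
Proof. by rewrite -[RHS](bcirc_tid_mul (p := p) 1%:M) mulmx1. Qed.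

Lemma bcirc_tE m n p (A : tensor R m n p) tau :
  bcirc A *m bcirc (@tE R n p tau) = bcirc (tcols A tau).
Proof.
rewrite {1 2}/bcirc mul_mxblock /bcirc; apply: eq_mxblock => i k.
rewrite (bigD1 k) //= big1 ?addr0.
  by rewrite /tE ord_sub_eq0 eqxx /tcols mulmx_colsub mulmx1.
move=> j jk; rewrite /tE ord_sub_eq0 (negbTE jk) mulmx0 //.
Qed.

Definition fro2 a b (M : 'M[R]_(a, b)) : R := \tr (M^T *m M).

Lemma fro2E a b (M : 'M[R]_(a, b)) : fro2 M = \sum_i \sum_j M i j ^+ 2.
Proof.
rewrite /fro2 /mxtrace exchange_big; apply: eq_bigr => j _.
rewrite mxE; apply: eq_bigr => i _; by rewrite mxE expr2.
Qed.

Lemma tfro2 m n p (X : tensor R m n p) : tfro X ^+ 2 = fro2 (tunfold X).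
Proof.
rewrite /tfro sqr_sqrtr; last first.
  by do 3 (apply: sumr_ge0 => ? _); exact: sqr_ge0.
rewrite /fro2 /tunfold tr_mxcol mul_mxrow_mxcol raddf_sum /=.
apply: eq_bigr => k _; by rewrite -/(fro2 (X k)) fro2E.
Qed.

End Bcirc.

Section MatAlg.
Variable R : realType.

Lemma trq N c (M : 'M[R]_N) (e : 'M[R]_(N, c)) :
  \tr (e^T *m M *m e) = \sum_j qf M (row j e^T).
Proof.
rewrite /mxtrace; apply: eq_bigr => j _.
rewrite /qf !mxE; apply: eq_bigr => k _; rewrite !mxE.
congr (_ * _); apply: eq_bigr => i _; by rewrite !mxE.
Qed.

Lemma fro2_rows N c (e : 'M[R]_(N, c)) : fro2 e = \sum_j nrm2 (row j e^T).
Proof.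
rewrite /fro2 -{1}(mulmx1 e^T) trq; apply: eq_bigr => j _.
by rewrite /qf /nrm2 mulmx1.
Qed.

Lemma fro2_ge0 a b (M : 'M[R]_(a, b)) : 0 <= fro2 M.
Proof. rewrite fro2E; do 2 (apply: sumr_ge0 => ? _); exact: sqr_ge0. Qed.

Lemma fro2_eq0 a b (M : 'M[R]_(a, b)) : fro2 M = 0 -> M = 0.
Proof.
rewrite fro2_rows => /eqP; rewrite psumr_eq0 => [/allP H|j _]; last exact: nrm2_ge0.
apply/matrixP => i j; have := H j (mem_index_enum j) => /= /eqP /nrm2_eq0 /rowP /(_ i).
by rewrite !mxE.
Qed.

Lemma fro2_0 a b : fro2 (0 : 'M[R]_(a, b)) = 0.
Proof. by rewrite fro2E big1 // => i _; rewrite big1 // => j _; rewrite mxE expr0n. Qed.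

Lemma tr_lower N c (M : 'M[R]_N) s : (forall v, s * nrm2 v <= qf M v) ->
  forall e : 'M[R]_(N, c), s * fro2 e <= \tr (e^T *m M *m e).
Proof.
move=> h e; rewrite fro2_rows trq mulr_sumr; apply: ler_sum => j _; exact: h.
Qed.

Lemma fro2_mul_bound a b c (M : 'M[R]_(a, b)) (e : 'M[R]_(b, c)) :
  fro2 (M *m e) <= sigma_max M ^+ 2 * fro2 e.
Proof.
rewrite !fro2_rows mulr_sumr; apply: ler_sum => j _.
rewrite trmx_mul row_mul; exact: sigma_max_bound.
Qed.

Lemma proj_fro2 N c (P : 'M[R]_N) (e : 'M[R]_(N, c)) : P^T = P -> P *m P = P ->
  fro2 (e - P *m e) = fro2 e - \tr (e^T *m P *m e).
Proof.
move=> hP hPP.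
have E : (e - P *m e)^T *m (e - P *m e) = e^T *m e - e^T *m P *m e.
  have -> : (e - P *m e)^T = e^T - e^T *m P by rewrite linearB /= trmx_mul hP.
  rewrite mulmxBl !mulmxBr !mulmxA -(mulmxA e^T P P) hPP.
  by rewrite subrr subr0.
by rewrite /fro2 E raddfB.
Qed.

Lemma fro2_expand a b (r w : 'M[R]_(a, b)) t :
  fro2 (r + t *: w) = fro2 r + 2 * t * \tr (r^T *m w) + t ^+ 2 * fro2 w.
Proof.
rewrite /fro2.
have -> : (r + t *: w)^T = r^T + t *: w^T by rewrite linearD /= linearZ.
rewrite mulmxDl !mulmxDr -!scalemxAl -!scalemxAr.
rewrite !raddfD /= !mxtraceZ.
have -> : \tr (w^T *m r) = \tr (r^T *m w) by rewrite -mxtrace_tr trmx_mul trmxK.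
ring.
Qed.

Lemma normal_eq a b c (M : 'M[R]_(a, b)) (y : 'M[R]_(b, c)) (bb : 'M[R]_(a, c)) :
  (forall z, fro2 (M *m y - bb) <= fro2 (M *m z - bb)) -> M^T *m (M *m y - bb) = 0.
Proof.
move=> hmin; set r := M *m y - bb.
set d := M^T *m r.
have H t : 0 <= 2 * t * fro2 d + t ^+ 2 * fro2 (M *m d).
  have := hmin (y + t *: d).
  have -> : M *m (y + t *: d) - bb = r + t *: (M *m d).
    by rewrite mulmxDr -scalemxAr /r addrAC.
  rewrite fro2_expand.
  have -> : \tr (r^T *m (M *m d)) = fro2 d by rewrite /fro2 /d trmx_mul trmxK !mulmxA.
  move=> h; rewrite -(lerD2l (fro2 r)) addr0 addrA; exact: h.
apply: fro2_eq0.
have a0 := fro2_ge0 d; have q0 := fro2_ge0 (M *m d).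
set A0 := fro2 d in H a0 *; set q := fro2 (M *m d) in H q0.
have qp : 0 < q + 1 by lra.
have hs := mulVf (lt0r_neq0 qp).
set s := (q + 1)^-1 in hs.
have sp : 0 < s by rewrite /s invr_gt0.
have := H (- (A0 * s)).
rewrite mulrDr mulr1 in hs.
have -> : 2 * - (A0 * s) * A0 + (- (A0 * s)) ^+ 2 * q = A0 ^+ 2 * s * (s * q - 2) by ring.
have hsq : s * q = 1 - s by rewrite -hs addrK.
rewrite hsq => h.
have h2 : A0 ^+ 2 * s <= 0.
  move: h; clear -sp; move=> h; nra.
have : A0 ^+ 2 <= 0 by move: h2 sp; clear; move=> h2 sp; nra.
move: a0; clear; move=> a0 h; nra.
Qed.

End MatAlg.

Section Iid.
Variable R : realType.
Variable n : nat.
Variable T : {set {set 'I_n}}.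
Variable D : {set 'I_n} -> R.
Hypothesis HD0 : forall tau, tau \in T -> 0 <= D tau.

Lemma iid0 f : iid_expect T D 0 f = f [::].
Proof.
rewrite /iid_expect (big_pred1 [tuple]) => [|t]; last first.
  by rewrite [t]tuple0 /= eqxx.
by rewrite big_nil mul1r.
Qed.

Lemma iidS k f : iid_expect T D k.+1 f =
  \sum_(tau in T) D tau * iid_expect T D k (fun s => f (tau :: s)).
Proof.
rewrite /iid_expect.
pose h (q : {set 'I_n} * k.-tuple {set 'I_n}) : k.+1.-tuple {set 'I_n} :=
  [tuple of q.1 :: q.2].
pose g (t : k.+1.-tuple {set 'I_n}) := (thead t, [tuple of behead t]).
have hb : bijective h.
  exists g => [[x t]|t]; first by rewrite /g /h /= theadE; congr pair; apply: val_inj.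
  by rewrite /g /h /= [RHS]tuple_eta.
rewrite (reindex h) /=; last by apply: onW_bij.
rewrite -(pair_big_dep (fun x => x \in T) (fun x (t : k.-tuple {set 'I_n}) => all (fun tau => tau \in T) t)
  (fun x (t : k.-tuple {set 'I_n}) => (\prod_(tau <- h (x, t)) D tau) * f (h (x, t)))) /=.
apply: eq_bigr => x xT; rewrite mulr_sumr; apply: eq_bigr => t _.
by rewrite big_cons mulrA.
Qed.

Lemma iid_w_ge0 k (t : k.-tuple {set 'I_n}) : all (fun tau => tau \in T) t ->
  0 <= \prod_(tau <- t) D tau.
Proof.
move/allP => h; rewrite big_seq; apply: prodr_ge0 => tau taut; exact: HD0 (h _ taut).
Qed.

Lemma iid_le k f g : (forall s, f s <= g s) -> iid_expect T D k f <= iid_expect T D k g.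
Proof.
move=> h; apply: ler_sum => t ht; apply: ler_wpM2l; [exact: iid_w_ge0 | exact: h].
Qed.

Lemma iidZ k c f : iid_expect T D k (fun s => c * f s) = c * iid_expect T D k f.
Proof. rewrite /iid_expect mulr_sumr; apply: eq_bigr => t _; ring. Qed.

Lemma iid_cst0 k : iid_expect T D k (fun _ => 0) = 0.
Proof. by rewrite /iid_expect big1 // => t _; rewrite mulr0. Qed.

End Iid.

Section StepAlg.
Variable R : realType.

Lemma step_alg Nm Nn c Nt (Am : 'M[R]_(Nm, Nn)) (Eb : 'M[R]_(Nn, Nt)) (Gi : 'M[R]_Nt)
  (x xd : 'M[R]_(Nn, c)) (b : 'M[R]_(Nm, c)) :
  Am^T *m (Am *m xd - b) = 0 ->
  Am *m (x - Eb *m (Gi *m ((Am *m Eb)^T *m (Am *m x - b)))) - Am *m xd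
   = (Am *m x - Am *m xd) - (Am *m Eb) *m (Gi *m (Am *m Eb)^T) *m (Am *m x - Am *m xd).
Proof.
move=> hn; set At := Am *m Eb.
have h0 : At^T *m (Am *m xd - b) = 0 by rewrite /At trmx_mul -mulmxA hn mulmx0.
have -> : Am *m x - b = (Am *m x - Am *m xd) + (Am *m xd - b) by rewrite addrA subrK.
rewrite mulmxDr h0 addr0 mulmxBr !mulmxA -/At.
by rewrite addrAC.
Qed.

Lemma proj_props Nm Nt (At : 'M[R]_(Nm, Nt)) (Gi : 'M[R]_Nt) :
  Gi *m (At^T *m At) = 1%:M ->
  (At *m (Gi *m At^T))^T = At *m (Gi *m At^T) /\
  (At *m (Gi *m At^T)) *m (At *m (Gi *m At^T)) = At *m (Gi *m At^T).
Proof.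
move=> h; have [Giu Gu] := mulmx1_unit h.
have hGi : Gi = invmx (At^T *m At).
  by rewrite -[Gi]mulmx1 -(mulmxV Gu) mulmxA h mul1mx.
split.
  rewrite !trmx_mul trmxK mulmxA; congr (_ *m _ *m _).
  by rewrite hGi trmx_inv trmx_mul trmxK.
rewrite !mulmxA -(mulmxA (At *m Gi) At^T At).
by rewrite -(mulmxA At Gi) h mulmx1.
Qed.

Lemma qfD N (M1 M2 : 'M[R]_N) v : qf (M1 + M2) v = qf M1 v + qf M2 v.
Proof. by rewrite /qf mulmxDr mulmxDl eD. Qed.

Lemma qf1 N (v : 'rV[R]_N) : qf 1%:M v = nrm2 v.
Proof. by rewrite /qf mulmx1. Qed.

Lemma qf_sum N (I : finType) (Pr : pred I) (F : I -> 'M[R]_N) (w : I -> R) v :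
  qf (\sum_(i | Pr i) w i *: F i) v = \sum_(i | Pr i) w i * qf (F i) v.
Proof.
rewrite /qf mulmx_sumr mulmx_suml summxE; apply: eq_bigr => i _.
by rewrite -scalemxAr -scalemxAl mxE.
Qed.

Lemma proj_qf N (P : 'M[R]_N) v : P^T = P -> P *m P = P ->
  0 <= qf P v /\ qf P v <= nrm2 v.
Proof.
move=> hP hPP; split.
  by rewrite -{1}hPP -{1}hP qf_tmul; exact: nrm2_ge0.
have hQ : (1%:M - P)^T *m (1%:M - P) = 1%:M - P.
  have -> : (1%:M - P)^T = 1%:M - P by rewrite linearB /= trmx1 hP.
  rewrite mulmxBl !mulmxBr mul1mx mulmx1 hPP.
  by rewrite mul1mx subrr subr0.
have := nrm2_ge0 (v *m (1%:M - P)^T); rewrite -qf_tmul hQ.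
by rewrite /qf mulmxBr mulmxBl eB -/(qf P v) mulmx1 subr_ge0.
Qed.

Lemma sigma_min_le1 N (M : 'M[R]_N) : (forall v, sigma_min M * nrm2 v <= qf M v) ->
  (forall v, qf M v <= nrm2 v) -> sigma_min M <= 1.
Proof.
case: N M => [|N] M h1 h2.
  rewrite /sigma_min (_ : [set _ | _] = set0) ?inf0 ?sqrtr0 ?ler01 //.
  apply/seteqP; split => lam //=.
  by rewrite /eigenvalue [eigenspace _ _]flatmx0 eqxx.
pose v : 'rV[R]_N.+1 := const_mx 1.
have vp : 0 < nrm2 v.
  rewrite nrm2E (bigD1 ord0) //= mxE expr1n; apply: ltr_pwDl => //.
  by apply: sumr_ge0 => i _; exact: sqr_ge0.
have := le_trans (h1 v) (h2 v).
by rewrite -{2}(mul1r (nrm2 v)) ler_pM2r.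
Qed.

End StepAlg.

Section Main.
Variables (R : realType) (m n l p : nat) (A : tensor R m n p) (B : tensor R m l p)
  (T : {set {set 'I_n}}) (D : {set 'I_n} -> R).
Hypothesis HD0 : forall tau, tau \in T -> 0 <= D tau.
Hypothesis HD1 : \sum_(tau in T) D tau = 1.
Hypothesis Hinv : forall tau, tau \in T ->
            tinvertible (tprod (tstar (tcols A tau)) (tcols A tau)).
Variable Xd : tensor R n l p.
Hypothesis Hmin : forall Y : tensor R n l p,
            tfro (tsub (tprod A Xd) B) ^+ 2 <= tfro (tsub (tprod A Y) B) ^+ 2.

Local Notation Am := (bcirc A).
Local Notation xd := (tunfold Xd).
Local Notation bm := (tunfold B).
Local Notation At tau := (bcirc (tcols A tau)).
Local Notation Gi tau := (bcirc (tinv (tprod (tstar (tcols A tau)) (tcols A tau)))).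
Local Notation Pr tau := (bcirc (tproj A tau)).

Lemma tinvP n' p' (G : tensor R n' n' p') : tinvertible G -> is_tinv G (tinv G).
Proof.
move=> h; rewrite /tinv; case: pselect => [H|//].
exact: (projT2 (cid H)).
Qed.

Lemma Gi_inv tau : tau \in T -> Gi tau *m ((At tau)^T *m At tau) = 1%:M.
Proof.
move=> tT; have [_ h] := tinvP (Hinv tT).
have := congr1 (@bcirc R _ _ p) h; rewrite bcirc_tid !bcirc_tprod bcirc_tstar //.
Qed.

Lemma Pr_E tau : Pr tau = At tau *m (Gi tau *m (At tau)^T).
Proof. by rewrite /tproj !bcirc_tprod bcirc_tstar. Qed.

Lemma Pr_props tau : tau \in T -> (Pr tau)^T = Pr tau /\ Pr tau *m Pr tau = Pr tau.
Proof. move=> tT; rewrite Pr_E; exact: proj_props (Gi_inv tT). Qed.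

Lemma normalA : Am^T *m (Am *m xd - bm) = 0.
Proof.
apply: normal_eq => z; have := Hmin (tfold z).
by rewrite !tfro2 !tunfoldB !unfold_tprod unfold_fold.
Qed.

Definition gerr (X : tensor R n l p) := fro2 (Am *m tunfold X - Am *m xd).

Lemma gerrE X : tfro (tsub (tprod A X) (tprod A Xd)) ^+ 2 = gerr X.
Proof. by rewrite tfro2 tunfoldB !unfold_tprod. Qed.

Lemma step_unfold X tau :
  Am *m tunfold (trbgs_step A B X tau) - Am *m xd =
  (Am *m tunfold X - Am *m xd) - Pr tau *m (Am *m tunfold X - Am *m xd).
Proof.
rewrite /trbgs_step /= tunfoldB !unfold_tprod bcirc_tstar tunfoldB unfold_tprod.
rewrite Pr_E -bcirc_tE.
exact: step_alg normalA.
Qed.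

Local Notation Mexp := (\sum_(tau in T) D tau *: Pr tau).

Lemma Mexp_sym : Mexp^T = Mexp.
Proof.
rewrite linear_sum /=; apply: eq_bigr => tau tT.
by rewrite linearZ /= (proj1 (Pr_props tT)).
Qed.

Lemma Mexp_psd v : 0 <= qf Mexp v.
Proof.
rewrite qf_sum; apply: sumr_ge0 => tau tT.
have [h1 h2] := Pr_props tT.
apply: mulr_ge0; [exact: HD0 | exact: (proj1 (proj_qf v h1 h2))].
Qed.

Lemma Mexp_le v : qf Mexp v <= nrm2 v.
Proof.
rewrite qf_sum -[X in _ <= X]mul1r -HD1 mulr_suml; apply: ler_sum => tau tT.
have [h1 h2] := Pr_props tT.
apply: ler_wpM2l; [exact: HD0 | exact: (proj2 (proj_qf v h1 h2))].
Qed.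

Lemma alpha_ge0 : 0 <= alphaA A T D.
Proof.
rewrite /alphaA subr_ge0; apply: sigma_min_le1; last exact: Mexp_le.
exact: sigma_min_bound Mexp_sym Mexp_psd.
Qed.

Lemma one_step X :
  \sum_(tau in T) D tau * gerr (trbgs_step A B X tau) <= alphaA A T D * gerr X.
Proof.
set e := Am *m tunfold X - Am *m xd.
have h1 : \sum_(tau in T) D tau * gerr (trbgs_step A B X tau) =
          \sum_(tau in T) D tau * (fro2 e - \tr (e^T *m Pr tau *m e)).
  apply: eq_bigr => tau tT; rewrite /gerr step_unfold -/e.
  by have [h1 h2] := Pr_props tT; rewrite proj_fro2.
have h2 : \tr (e^T *m Mexp *m e) = \sum_(tau in T) D tau * \tr (e^T *m Pr tau *m e).
  rewrite trq; under eq_bigr do rewrite qf_sum.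
  rewrite exchange_big /=; apply: eq_bigr => tau _.
  by rewrite trq mulr_sumr.
have h3 : sigma_min Mexp * fro2 e <= \tr (e^T *m Mexp *m e).
  apply: tr_lower; exact: sigma_min_bound Mexp_sym Mexp_psd.
rewrite h1.
under eq_bigr do rewrite mulrBr.
rewrite sumrB -mulr_suml HD1 mul1r -h2 /alphaA mulrBl mul1r.
by rewrite lerD2l lerN2.
Qed.

Lemma part1 k X0 :
  iid_expect T D k (fun s => gerr (trbgs_iter A B X0 s)) <= alphaA A T D ^+ k * gerr X0.
Proof.
elim: k X0 => [|k IH] X0.
  by rewrite iid0 expr0 mul1r.
rewrite iidS.
apply: le_trans (_ : \sum_(tau in T) D tau * (alphaA A T D ^+ k *
        gerr (trbgs_step A B X0 tau)) <= _).
  apply: ler_sum => tau tT; apply: ler_wpM2l; first exact: HD0.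
  exact: (IH (trbgs_step A B X0 tau)).
have ak := exprn_ge0 k alpha_ge0.
under eq_bigr do rewrite mulrCA.
rewrite -mulr_sumr exprSr -mulrA; apply: ler_wpM2l => //.
exact: one_step.
Qed.

Lemma part2 (Huniq : forall Y, tprod A Y = tprod A Xd -> Y = Xd) X0 k :
  iid_expect T D k (fun s => tfro (tsub (trbgs_iter A B X0 s) Xd) ^+ 2)
  <= kappa2 A * alphaA A T D ^+ k * tfro (tsub X0 Xd) ^+ 2.
Proof.
have hf Y : tfro (tsub Y Xd) ^+ 2 = fro2 (tunfold Y - xd) by rewrite tfro2 tunfoldB.
rewrite (_ : (fun s => _) = (fun s => fro2 (tunfold (trbgs_iter A B X0 s) - xd))); last first.
  by apply: funext => s; rewrite hf.
rewrite hf.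
have [l0|lpos] := posnP l.
  have z a (M : 'M[R]_(a, l)) : fro2 M = 0.
    rewrite fro2E; apply: big1 => i _; apply: big1 => j _.
    by case: j => j' hj; exfalso; move: hj; rewrite l0.
  rewrite (_ : (fun s => _) = (fun _ => 0)); last by apply: funext => s; rewrite z.
  by rewrite iid_cst0 z mulr0.
have hinj (y : 'M[R]_(\sum_(i < p) n, l)) : Am *m y = 0 -> y = 0.
  move=> hy.
  have e1 : tprod A (tfold (xd + y)) = tprod A Xd.
    by rewrite /tprod unfold_fold mulmxDr hy addr0.
  have := congr1 (@tunfold R n l p) (Huniq _ e1); rewrite unfold_fold => h.
  by rewrite -[y](addKr xd) h addNr.
set G := Am^T *m Am.
have GT : G^T = G by rewrite /G trmx_mul trmxK.
have Gu : G \in unitmx.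
  rewrite -row_free_unit; apply: inj_row_free => v hv.
  have : nrm2 (v *m Am^T) = 0 by rewrite -qf_tmul /qf -/G hv mul0mx mxE.
  move/nrm2_eq0 => hv2.
  pose j0 : 'I_l := Ordinal lpos.
  have hA : Am *m v^T = 0 by rewrite -[Am]trmxK -trmx_mul hv2 trmx0.
  have hy : Am *m (v^T *m delta_mx 0 j0) = 0 by rewrite mulmxA hA mul0mx.
  apply/rowP => i; have := congr1 (fun M : 'M[R]_(\sum_(i < p) n, l) => M i j0) (hinj _ hy).
  by rewrite !mxE big_ord1 !mxE !eqxx mulr1.
have hMP : exists X, is_mp_pinv Am X.
  exists (invmx G *m Am^T); split.
  - by rewrite -!mulmxA -/G mulVmx // mulmx1.
  - by rewrite -(mulmxA (invmx G) Am^T Am) -/G mulVmx // mul1mx.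
  - by rewrite !trmx_mul trmxK trmx_inv GT !mulmxA.
  - by rewrite -mulmxA -/G mulVmx // trmx1.
have hpinv : is_mp_pinv Am (mp_pinv Am).
  by rewrite /mp_pinv; case: pselect => [H|//]; exact: (projT2 (cid H)).
have hrec (d : 'M[R]_(\sum_(i < p) n, l)) : mp_pinv Am *m (Am *m d) = d.
  case: hpinv => h1 _ _ _.
  apply/eqP; rewrite -subr_eq0; apply/eqP; apply: hinj.
  by rewrite mulmxBr !mulmxA h1 subrr.
set sd := sigma_max (mp_pinv Am).
have hb (d : 'M[R]_(\sum_(i < p) n, l)) : fro2 d <= sd ^+ 2 * fro2 (Am *m d).
  by rewrite -{1}(hrec d); exact: fro2_mul_bound.
apply: (@le_trans _ _ (iid_expect T D k (fun s => sd ^+ 2 * gerr (trbgs_iter A B X0 s)))).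
  apply: (iid_le HD0) => s; rewrite /gerr -mulmxBr; exact: hb.
rewrite iidZ.
have h := part1 k X0; have ak := exprn_ge0 k alpha_ge0.
apply: le_trans (ler_wpM2l (sqr_ge0 sd) h) _.
rewrite /gerr -mulmxBr /kappa2 -/sd.
have h2 := fro2_mul_bound Am (tunfold X0 - xd).
have s0 := sqr_ge0 sd.
have -> : sd ^+ 2 * sigma_max Am ^+ 2 * alphaA A T D ^+ k * fro2 (tunfold X0 - xd) =
  sd ^+ 2 * (alphaA A T D ^+ k * (sigma_max Am ^+ 2 * fro2 (tunfold X0 - xd))) by ring.
by apply: ler_wpM2l => //; apply: ler_wpM2l.
Qed.

End Main.

Local Close Scope classical_set_scope.
Unset Implicit Arguments.

Theorem theorem1 (R : realType) (m n l p : nat)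
  (A : tensor R m n p) (B : tensor R m l p)
  (T : {set {set 'I_n}}) (D : {set 'I_n} -> R)
  (HD0 : forall tau, tau \in T -> 0 <= D tau)
  (HD1 : \sum_(tau in T) D tau = 1)
  (Hinv : forall tau, tau \in T ->
            tinvertible (tprod (tstar (tcols A tau)) (tcols A tau)))
  (X0 Xd : tensor R n l p)
  (Hmin : forall Y : tensor R n l p,
            tfro (tsub (tprod A Xd) B) ^+ 2 <= tfro (tsub (tprod A Y) B) ^+ 2) :
  (forall k : nat,
     iid_expect T D k
       (fun s => tfro (tsub (tprod A (trbgs_iter A B X0 s)) (tprod A Xd)) ^+ 2)
     <= alphaA A T D ^+ k * tfro (tsub (tprod A X0) (tprod A Xd)) ^+ 2)
  /\
  ((forall Y : tensor R n l p, tprod A Y = tprod A Xd -> Y = Xd) ->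
   forall k : nat,
     iid_expect T D k (fun s => tfro (tsub (trbgs_iter A B X0 s) Xd) ^+ 2)
     <= kappa2 A * alphaA A T D ^+ k * tfro (tsub X0 Xd) ^+ 2).
Proof.
split.
  move=> k.
  rewrite (_ : (fun s => _) = (fun s => gerr A Xd (trbgs_iter A B X0 s))); last first.
    by apply: funext => s; rewrite gerrE.
  rewrite gerrE; exact: (part1 HD0 HD1 Hinv Hmin).
move=> Hu k; exact: (part2 HD0 HD1 Hinv Hmin Hu).
Qed.
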